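(* Under the setting and hypotheses of the convergence theorem stated in the context (existence of a valid solution $\boldsymbol{x}^\star$ and priors satisfying $1\ge q_v>1-\epsilon_v$ if $\mathtt{x}^\star_v=0$, $0\le q_v<\epsilon_v$ if $\mathtt{x}^\star_v=1$), after the first BP iteration $$\mathsf{r}^{(1)}_v(\mathtt{x}^\star_v)>\mathsf{r}^{(1)}_v(1-\mathtt{x}^\star_v)\quad\text{for all } v\in\mathcal{V},$$ i.e., $\widehat{x}^{(1)}_v=\mathtt{x}^\star_v$ for all $v\in\mathcal{V}$.
   Context: Factor graph: a finite set $\mathcal{V}$ of binary variables $x_v\in\{0,1\}$ and a finite set $\mathcal{J}$ of factors; each factor $J$ has a nonempty neighborhood $\mathcal{V}_J\subseteq\mathcal{V}$ and a function $\mathsf{g}_J:\{0,1\}^{|\mathcal{V}_J|}\to\{0,1\}$. For $v\in\mathcal{V}$, $\mathcal{J}_v=\{J: v\in\mathcal{V}_J\}$, assumed nonempty. A valid solution is $\boldsymbol{x}^\star\in\{0,1\}^{\mathcal{V}}$ with $\mathsf{g}_J(\boldsymbol{x}^\star_{\mathcal{V}_J})=1$ for all $J$. Define $\kappa_v=\max_{J\in\mathcal{J}_v}|\{\mathbf{x}_{\mathcal{V}_J}:\mathsf{g}_J(\mathbf{x}_{\mathcal{V}_J})=1\}|$ and $\epsilon_v=1/(1+\kappa_v^{|\mathcal{J}_v|})$. BP: priors $\mathrm{P}_v(0)=q_v$, $\mathrm{P}_v(1)=1-q_v$; $\mathsf{m}^{(0)}_{v\to J}(0)=q_v$, $\mathsf{m}^{(0)}_{v\to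 J}(1)=1-q_v$; for $n\ge1$, $\mathsf{m}^{(n)}_{J\to v}(x)=\mathtt{C}^{(n)}_{J\to v}\sum_{\mathbf{x}_{\mathcal{V}_J\setminus v}}\mathsf{g}_J(\mathbf{x}_{\mathcal{V}_J\setminus v},x_v=x)\prod_{y\in\mathcal{V}_J\setminus v}\mathsf{m}^{(n-1)}_{y\to J}(x_y)$ and $\mathsf{m}^{(n)}_{v\to J}(x)=\mathtt{C}^{(n)}_{v\to J}\mathrm{P}_v(x)\prod_{I\in\mathcal{J}_v\setminus J}\mathsf{m}^{(n)}_{I\to v}(x)$, with positive normalizing constants making $\mathsf{m}(0)+\mathsf{m}(1)=1$. Marginals $\mathsf{r}^{(n)}_v(x)=\mathrm{P}_v(x)\prod_{J\in\mathcal{J}_v}\mathsf{m}^{(n)}_{J\to v}(x)$; decision $\widehat{x}^{(n)}_v=\mathsf{1}\{\mathsf{r}^{(n)}_v(1)\ge\mathsf{r}^{(n)}_v(0)\}$. *)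

(* Defs.v *)
From HB Require Import structures.
From mathcomp Require Import all_boot all_order all_algebra.
Set Implicit Arguments. Unset Strict Implicit. Unset Printing Implicit Defensive.
Import Order.TTheory GRing.Theory Num.Theory.
Local Open Scope ring_scope.

(* Binary values {0,1} are encoded as bool: false = 0, true = 1. *)

Definition lconf (V : finType) (A : {set V}) := {ffun {v : V | v \in A} -> bool}.

Definition restr (V : finType) (A : {set V}) (x : V -> bool) : lconf A :=
  [ffun y => x (val y)].

Definition adj (V F : finType) (nb : F -> {set V}) (v : V) : {set F} :=
  [set J | v \in nb J].

Definition kappa (V F : finType) (nb : F -> {set V})
  (g : forall J : F, lconf (nb J) -> bool) (v : V) : nat :=
  \max_(J in adj nb v) #|[set c : lconf (nb J) | g J c]|.

Definition eps (R : realFieldType) (V F : finType) (nb : F -> {set V})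
  (g : forall J : F, lconf (nb J) -> bool) (v : V) : R :=
  1 / (1 + ((kappa g v) ^ #|adj nb v|)%N%:R).

Definition prior (R : realFieldType) (V : finType) (q : V -> R) (v : V) (x : bool) : R :=
  if x then 1 - q v else q v.

Definition normalize (R : realFieldType) (U : bool -> R) (x : bool) : R :=
  U x / (U false + U true).

(* factor-to-variable update, from variable-to-factor messages mv y J x *)
Definition fmsg (R : realFieldType) (V F : finType) (nb : F -> {set V})
  (g : forall J : F, lconf (nb J) -> bool) (mv : V -> F -> bool -> R)
  (J : F) (v : V) : bool -> R :=
  normalize (fun x : bool =>
    \sum_(c : lconf (nb J) | [forall y, (val y == v) ==> (c y == x)])
       (g J c)%:R * \prod_(y : {y : V | y \in nb J} | val y != v) mv (val y) J (c y)).

(* variable-to-factor update, from factor-to-variable messages mf I v x *)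
Definition vmsg (R : realFieldType) (V F : finType) (nb : F -> {set V})
  (q : V -> R) (mf : F -> V -> bool -> R) (v : V) (J : F) : bool -> R :=
  normalize (fun x : bool =>
    prior q v x * \prod_(I in adj nb v | I != J) mf I v x).

Fixpoint vmsgs (R : realFieldType) (V F : finType) (nb : F -> {set V})
  (g : forall J : F, lconf (nb J) -> bool) (q : V -> R) (n : nat)
  : V -> F -> bool -> R :=
  match n with
  | 0 => fun v _ x => prior q v x
  | n'.+1 => vmsg nb q (fmsg g (vmsgs g q n'))
  end.

(* m^{(n)}_{J -> v}, for n >= 1 *)
Definition fmsgs (R : realFieldType) (V F : finType) (nb : F -> {set V})
  (g : forall J : F, lconf (nb J) -> bool) (q : V -> R) (n : nat)
  : F -> V -> bool -> R :=
  fmsg g (vmsgs g q n.-1).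

(* marginal r^{(n)}_v(x), n >= 1 *)
Definition marg (R : realFieldType) (V F : finType) (nb : F -> {set V})
  (g : forall J : F, lconf (nb J) -> bool) (q : V -> R) (n : nat) (v : V) (x : bool) : R :=
  prior q v x * \prod_(J in adj nb v) fmsgs g q n J v x.

Definition decision (R : realFieldType) (V F : finType) (nb : F -> {set V})
  (g : forall J : F, lconf (nb J) -> bool) (q : V -> R) (n : nat) (v : V) : bool :=
  marg g q n v false <= marg g q n v true.

(* Main.v *)
Require Import Defs.
From HB Require Import structures.
From mathcomp Require Import all_boot all_order all_algebra.
From mathcomp Require Import ring lra.
Import Order.TTheory GRing.Theory Num.Theory.
Local Open Scope ring_scope.

Lemma fbounds (R : realFieldType) (V F : finType) (nb : F -> {set V})
  (g : forall J : F, lconf (nb J) -> bool) (q : V -> R) (xs : V -> bool)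
  (v : V) (J : F) (K : nat) :
  g J (restr (nb J) xs) -> (#|[set c | g J c]| <= K)%N ->
  (forall y b, 0 <= prior q y b <= prior q y (xs y)) ->
  (forall y, 0 < prior q y (xs y)) ->
  0 <= fmsgs g q 1 J v (~~ xs v) <= K%:R * fmsgs g q 1 J v (xs v)
  /\ 0 < fmsgs g q 1 J v (xs v).
Proof.
move=> gx cK prle ppos.
pose U (x : bool) := \sum_(c : lconf (nb J) | [forall y, (val y == v) ==> (c y == x)])
       (g J c)%:R * \prod_(y : {y : V | y \in nb J} | val y != v) prior q (val y) (c y).
pose w0 := \prod_(y : {y : V | y \in nb J} | val y != v) prior q (val y) (xs (val y)).
have -> : fmsgs g q 1 J v = fun x => U x / (U false + U true) by [].
have w0p : 0 < w0 by apply: prodr_gt0 => y _; apply: ppos.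
have Uge0 : forall x, 0 <= U x.
  move=> x; apply: sumr_ge0 => c _; apply: mulr_ge0; first exact: ler0n.
  by apply: prodr_ge0 => y _; case/andP: (prle (val y) (c y)).
have Ux : w0 <= U (xs v).
  rewrite /U (bigD1 (restr (nb J) xs)) /=; last first.
    by apply/forallP => y; apply/implyP => /eqP <-; rewrite ffunE.
  rewrite gx mul1r.
  have -> : \prod_(y : {y : V | y \in nb J} | val y != v)
      prior q (val y) (restr (nb J) xs y) = w0 by apply: eq_bigr => y _; rewrite ffunE.
  rewrite lerDl; apply: sumr_ge0 => c _; apply: mulr_ge0; first exact: ler0n.
  by apply: prodr_ge0 => y _; case/andP: (prle (val y) (c y)).
have Unx : U (~~ xs v) <= K%:R * w0.
  apply: (@le_trans _ _ (\sum_(c : lconf (nb J) | [forall y, (val y == v) ==> (c y == ~~ xs v)])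
       (g J c)%:R * w0)).
    apply: ler_sum => c _; apply: ler_wpM2l; first exact: ler0n.
    by apply: ler_prod => y _; apply: prle.
  rewrite -mulr_suml; apply: ler_wpM2r; first exact: ltW.
  rewrite -natr_sum ler_nat; apply: leq_trans cK.
  apply: (@leq_trans (\sum_(c : lconf (nb J)) g J c)).
    rewrite big_mkcond /=; apply: leq_sum => c _; by case: ifP.
  rewrite -sum1_card [X in (_ <= X)%N]big_mkcond /=.
  by apply: leq_sum => c _; rewrite inE; case: (g J c).
have Dp : 0 < U false + U true.
  have := Uge0 (~~ xs v); have := Ux; case: (xs v) => /= ? ?; lra.
split; last by apply: divr_gt0 => //; lra.
apply/andP; split; first by apply: divr_ge0 => //; apply: ltW.
rewrite mulrA; apply: ler_wpM2r; first by rewrite invr_ge0 ltW.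
exact: (le_trans Unx (ler_wpM2l (ler0n _ _) Ux)).
Qed.

Theorem lemma1 (R : realFieldType) (V F : finType) (nb : F -> {set V})
  (g : forall J : F, lconf (nb J) -> bool) (q : V -> R) (xs : V -> bool) :
  (forall J : F, nb J != set0) ->
  (forall v : V, adj nb v != set0) ->
  (forall J : F, g J (restr (nb J) xs)) ->
  (forall v : V, if xs v then 0 <= q v < eps R g v
                 else (1 - eps R g v < q v) && (q v <= 1)) ->
  forall v : V,
    marg g q 1 v (xs v) > marg g q 1 v (~~ xs v) /\ decision g q 1 v = xs v.
Proof.
move=> nbJ adjv gx hq v.
have kpos : forall y, (0 < kappa g y)%N.
  move=> y; case/set0Pn: (adjv y) => J HJ.
  apply: (leq_trans _ (leq_bigmax_cond _ HJ)).
  by apply/card_gt0P; exists (restr (nb J) xs); rewrite inE gx.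
pose M y := (((kappa g y) ^ #|adj nb y|)%N%:R : R).
have M1 : forall y, 1 <= M y by move=> y; rewrite /M ler1n expn_gt0 kpos.
have epsP : forall y, [/\ 0 < eps R g y, eps R g y <= 1/2 & eps R g y * M y = 1 - eps R g y].
  move=> y; rewrite /eps -/(M y); have := M1 y; set m := M y => m1.
  have mp : 0 < 1 + m by lra.
  split; first by rewrite divr_gt0 //; lra.
    by rewrite ler_pdivrMr //; lra.
  by field; rewrite gt_eqF.
have prle : forall y b, 0 <= prior q y b <= prior q y (xs y).
  move=> y b; have [e0 e2 _] := epsP y; have := hq y; rewrite /prior.
  by case: (xs y); case: b => /= /andP [h1 h2]; apply/andP; split; lra.
have ppos : forall y, 0 < prior q y (xs y).
  move=> y; have [e0 e2 _] := epsP y; have := hq y; rewrite /prior.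
  by case: (xs y) => /= /andP [h1 h2]; lra.
have pnx : prior q v (~~ xs v) < eps R g v.
  have := hq v; rewrite /prior; by case: (xs v) => /= /andP [h1 h2]; lra.
have px : 1 - eps R g v < prior q v (xs v).
  have := hq v; rewrite /prior; by case: (xs v) => /= /andP [h1 h2]; lra.
have HJ : forall J, J \in adj nb v ->
   0 <= fmsgs g q 1 J v (~~ xs v) <= (kappa g v)%:R * fmsgs g q 1 J v (xs v)
   /\ 0 < fmsgs g q 1 J v (xs v).
  move=> J HJ; apply: fbounds => //.
  by rewrite /kappa; apply: (leq_bigmax_cond (F := fun J => #|[set c | g J c]|)) HJ.
set A := \prod_(J in adj nb v) fmsgs g q 1 J v (xs v).
set An := \prod_(J in adj nb v) fmsgs g q 1 J v (~~ xs v).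
have Ap : 0 < A by apply: prodr_gt0 => J /HJ [].
have An0 : 0 <= An by apply: prodr_ge0 => J /HJ [] /andP [].
have AnA : An <= M v * A.
  rewrite /M natrX -prodr_const -big_split /=.
  by apply: ler_prod => J /HJ [].
have [e0 e2 eM] := epsP v.
have pn0 : 0 <= prior q v (~~ xs v) by case/andP: (prle v (~~ xs v)).
have key : marg g q 1 v (~~ xs v) < marg g q 1 v (xs v).
  rewrite /marg -/A -/An.
  apply: (@le_lt_trans _ _ (prior q v (~~ xs v) * M v * A)).
    by rewrite -mulrA; apply: ler_wpM2l.
  rewrite ltr_pM2r //.
  apply: (@le_lt_trans _ _ (eps R g v * M v)); last by rewrite eM.
  by apply: ler_wpM2r; [have := M1 v; lra | apply: ltW].
split => //.
rewrite /decision; move: key; case: (xs v) => /= key; first exact: ltW.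
by rewrite leNgt key.
Qed.
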